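(* Let $m\ge2$, $N\in\mathbb{N}$, let $\Omega\subset\mathbb{R}^m$ be a bounded open connected set, and let $\overline\Omega=\{(x_1,\ldots,x_N)\in\Omega^N: x_i\neq x_j \text{ for all } i\neq j\}$. Let $V_1,\ldots,V_d$ be smooth vector fields on $\mathbb{R}^m$ such that $\mathrm{Lie}(V_1,\ldots,V_d)$ interpolates at the tuple $\bar x=(x_1,\ldots,x_N)\in\overline\Omega$. Then \[ \mathrm{Lie}(V_1^{\oplus N},\ldots,V_d^{\oplus N})(\bar x)=(\mathbb{R}^m)^N, \] i.e. the vector fields $V_1^{\oplus N},\ldots,V_d^{\oplus N}$ on $(\mathbb{R}^m)^N$ satisfy the Hörmander condition at $\bar x$.
   Context: For smooth vector fields $U,V$ on $\mathbb{R}^n$, the Lie bracket is $[U,V](x)=DV(x)U(x)-DU(x)V(x)$, with $DU$ the Jacobian matrix. $\mathrm{Lie}(U_1,\ldots,U_d)$ is the smallest linear space of vector fields containing $U_1,\ldots,U_d$ and closed under Lie brackets, and $\mathrm{Lie}(U_1,\ldots,U_d)(x)=\{W(x): W\in\mathrm{Lie}(U_1,\ldots,U_d)\}\subseteq\mathbb{R}^n$. For a vector field $V$ on $\mathbb{R}^m$, $V^{\oplus N}$ is the vector field on $(\mathbb{R}^m)^N$ given by $V^{\oplus N}(x_1,\ldots,x_N)=(V(x_1),\ldots,V(x_N))$. A collection $\mathcal V$ of vector fields on $\mathbb{R}^m$ interpolates at a tuple $(x_1,\ldots,x_N)$ if for every $(v_1,\ldots,v_N)\in(\mathbb{R}^m)^N$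 there exists $\widehat V\in\mathcal V$ with $\widehat V(x_i)=v_i$ for all $i=1,\ldots,N$. *)

(* Defs.v *)
From HB Require Import structures.
From mathcomp Require Import all_boot all_order all_algebra.
From mathcomp Require Import all_classical all_reals all_analysis.
Set Implicit Arguments. Unset Strict Implicit. Unset Printing Implicit Defensive.
Import Order.TTheory GRing.Theory Num.Theory.
Import numFieldNormedType.Exports.
Local Open Scope classical_set_scope.
Local Open Scope ring_scope.

Section Defs.
Variable R : realType.

Fixpoint iterD {V W : normedModType R} (s : seq V) (f : V -> W) : V -> W :=
  match s with
  | [::] => f
  | v :: s' => fun x => 'D_v (iterD s' f) x
  end.

Definition smooth {V W : normedModType R} (f : V -> W) : Prop :=
  forall s : seq V, continuous (iterD s f) /\ (forall v x, derivable (iterD s f) x v).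

Definition lie_bracket {V : normedModType R} (U W : V -> V) : V -> V :=
  fun x => 'D_(U x) W x - 'D_(W x) U x.

Inductive Lie {V : normedModType R} {d : nat} (U : 'I_d -> V -> V) : (V -> V) -> Prop :=
| Lie_gen i : Lie U (U i)
| Lie_zero : Lie U (fun _ => 0)
| Lie_add W1 W2 : Lie U W1 -> Lie U W2 -> Lie U (fun x => W1 x + W2 x)
| Lie_scale (a : R) W : Lie U W -> Lie U (fun x => a *: W x)
| Lie_bracket W1 W2 : Lie U W1 -> Lie U W2 -> Lie U (lie_bracket W1 W2).

Definition Lie_at {V : normedModType R} {d : nat} (U : 'I_d -> V -> V) (x : V) : set V :=
  [set W x | W in Lie U].

(* (R^m)^N is represented as N x m matrices; row i is the i-th point.
   V^{(+)N}(x_1,...,x_N) = (V x_1, ..., V x_N). *)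
Definition dsum {m : nat} (N : nat) (V : 'rV[R]_m -> 'rV[R]_m) :
  'M[R]_(N, m) -> 'M[R]_(N, m) :=
  fun X => \matrix_(i < N) V (row i X).

Definition interpolates {m N : nat} (F : set ('rV[R]_m -> 'rV[R]_m)) (X : 'M[R]_(N, m)) : Prop :=
  forall Y : 'M[R]_(N, m), exists2 W, F W & forall i : 'I_N, W (row i X) = row i Y.

Definition config {m : nat} (N : nat) (Omega : set 'rV[R]_m) : set 'M[R]_(N, m) :=
  [set X | (forall i, Omega (row i X)) /\ (forall i j : 'I_N, i != j -> row i X != row j X)].

End Defs.
Arguments config {R m} N Omega.
Arguments dsum {R m} N V.
Arguments interpolates {R m N} F X.
Arguments Lie_at {R V d} U x.

(* Main.v *)
Require Import Defs.
From HB Require Import structures.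
From mathcomp Require Import all_boot all_order all_algebra.
From mathcomp Require Import all_classical all_reals all_analysis.
From mathcomp Require Import ring lra.
Import Order.TTheory GRing.Theory Num.Theory.
Import numFieldNormedType.Exports.
Local Open Scope classical_set_scope.
Local Open Scope ring_scope.

Set Implicit Arguments. Unset Strict Implicit.
Section Calc.
Variable R : realType.
Variable V : normedModType R.

Lemma derive_eps (g : V -> R) x u L :
  (forall eps, 0 < eps -> exists2 d, 0 < d & forall k : R, k != 0 -> `|k| < d ->
     `|k^-1 *: (g (k *: u + x) - g x) - L| <= eps) ->
  derivable g x u /\ 'D_u g x = L.
Proof.
move=> H.
have cv : (fun h : R => h^-1 *: ((g \o shift x) (h *: u) - g x)) @ 0^' --> L.
  apply/cvgrPdist_le => eps eps0.
  have [d d0 Hd] := H eps eps0.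
  near=> k.
  rewrite distrC; apply: Hd.
    by near: k; exact: nbhs_dnbhs_neq.
  by near: k; exact: dnbhs0_lt.
split; first by apply/cvg_ex; exists L.
exact: cvg_lim cv.
Unshelve. all: by end_near. Qed.

Lemma phi_derive (g : V -> R) y w s :
  derivable g (y + s *: w) w ->
  is_derive s 1 (fun s => g (y + s *: w)) ('D_w g (y + s *: w)).
Proof.
move=> dg.
have E : (fun h : R => h^-1 *: (((fun s => g (y + s *: w)) \o shift s) (h *: 1) - g (y + s *: w)))
  = (fun h : R => h^-1 *: ((g \o shift (y + s *: w)) (h *: w) - g (y + s *: w))).
  apply/funext => h /=.
  by rewrite [_%:A]mulr1 scalerDl addrCA addrA.
split; rewrite /derivable /derive E //.
Qed.


Lemma phi_cont (g : V -> R) y w : (forall z, derivable g z w) ->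
  continuous (fun s : R => g (y + s *: w)).
Proof.
move=> dg s.
apply: differentiable_continuous; apply/derivable1_diffP.
by have [] := phi_derive (y:=y) (s:=s) (dg (y + s *: w)).
Qed.

Lemma mvt_bound (g : V -> R) w x : (forall y, derivable g y w) ->
  continuous ('D_w g) ->
  forall e, 0 < e -> exists2 d, 0 < d & forall y (t : R), `|y - x| < d -> `|t| < d ->
   `|g (y + t *: w) - g y - t * 'D_w g x| <= e * `|t|.
Proof.
move=> dg cg e e0.
have := cg x; move/cvgrPdist_lt => /(_ e e0) /nbhs_ballP [d0 d00 Hd0].
have w1 : 0 < 1 + `|w| by rewrite ltr_pwDl.
exists (d0 / (1 + `|w|)); first by rewrite divr_gt0.
move=> y t hy ht.
have [c cin E] : exists2 c, `|c| <= `|t| &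
    g (y + t *: w) - g y = t * 'D_w g (y + c *: w).
  case: (leP 0 t) => t0.
  - have [c cI Ec] := MVT_segment t0 (fun s _ => phi_derive (y:=y) (s:=s) (dg _))
      (continuous_subspaceT (phi_cont (y:=y) dg)).
    exists c.
      move: cI; rewrite in_itv /= => /andP[c0 ct].
      by rewrite !ger0_norm.
    by move: Ec; rewrite scale0r addr0 subr0 mulrC.
  - have [c cI Ec] := MVT_segment (ltW t0) (fun s _ => phi_derive (y:=y) (s:=s) (dg _))
      (continuous_subspaceT (phi_cont (y:=y) dg)).
    exists c.
      move: cI; rewrite in_itv /= => /andP[tc c0].
      rewrite !ler0_norm //; first by rewrite lerN2.
      exact: ltW.
    move: Ec; rewrite scale0r addr0 sub0r => Ec.
    by rewrite -[LHS]opprB Ec mulrN opprK mulrC.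
rewrite E -mulrBr normrM mulrC ler_wpM2r //.
apply: ltW; rewrite -normrN opprB.
apply: Hd0.

have : `|x - (y + c *: w)| <= `|x - y| + `|c| * `|w|.
  by rewrite opprD addrA -normrZ (le_trans (ler_normB _ _)).
move=> H; rewrite -ball_normE /=; apply: (le_lt_trans H).

have H1 : `|c| * `|w| <= d0 / (1 + `|w|) * `|w|.
  by rewrite ler_wpM2r // (le_trans cin) // ltW.
have H2 : `|x - y| < d0 / (1 + `|w|) by rewrite distrC.
have H3 : d0 / (1 + `|w|) + d0 / (1 + `|w|) * `|w| = d0.
  by rewrite -{1}[_ / _]mulr1 -mulrDr mulrAC -mulrA divff ?mulr1 // gt_eqF.
by rewrite -[X in _ < X]H3 ltr_leD.
Qed.


Lemma quot_helper (k Z L : R) : k != 0 ->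
  `|k^-1 *: Z - L| = `|Z - k * L| / `|k|.
Proof.
move=> k0.
have -> : k^-1 *: Z - L = k^-1 * (Z - k * L).
  by rewrite [k^-1 *: Z]/GRing.scale /= mulrBr mulrA mulVf // mul1r.
by rewrite normrM normfV mulrC.
Qed.

Lemma derive_dirZ (g : V -> R) w x a : (forall y, derivable g y w) ->
  continuous ('D_w g) ->
  derivable g x (a *: w) /\ 'D_(a *: w) g x = a * 'D_w g x.
Proof.
move=> dg cg; apply: derive_eps => eps eps0.
have [->|a0] := eqVneq a 0.
  exists 1 => // k k0 _.
  by rewrite scale0r scaler0 add0r subrr scaler0 mul0r subrr normr0 ltW.
have na : 0 < `|a| by rewrite normr_gt0.
have [d d0 Hd] := mvt_bound x dg cg (divr_gt0 eps0 na).
exists (d / `|a|); first by rewrite divr_gt0.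
move=> k k0 kd.
rewrite quot_helper // ler_pdivrMr ?normr_gt0 //.
have := Hd x (k * a); rewrite subrr normr0 => /(_ d0).
rewrite normrM -(ltr_pdivlMr _ _ na) => /(_ kd).
rewrite scalerA [_ *: w + x]addrC => H; rewrite mulrA; apply: le_trans H _.
by rewrite mulrA mulrAC divfK ?gt_eqF.
Qed.

Lemma derive_dirD (g : V -> R) v w x : (forall y, derivable g y v) ->
  (forall y, derivable g y w) -> continuous ('D_v g) -> continuous ('D_w g) ->
  derivable g x (v + w) /\ 'D_(v + w) g x = 'D_v g x + 'D_w g x.
Proof.
move=> dv dw cv cw; apply: derive_eps => e e0.
have e20 : 0 < e / 2 by rewrite divr_gt0.
have [d1 d10 H1] := mvt_bound x dw cw e20.
have [d2 d20 H2] := mvt_bound x dv cv e20.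
have v1 : 0 < 1 + `|v| by rewrite ltr_pwDl.
exists (Num.min d2 (d1 / (1 + `|v|))).
  by rewrite lt_min d20 divr_gt0.
move=> k k0; rewrite lt_min => /andP[kd2 kd1].
rewrite quot_helper // ler_pdivrMr ?normr_gt0 //.
have kd1' : `|k| < d1.
  apply: (lt_le_trans kd1); rewrite ler_pdivrMr //.
  have := normr_ge0 v; nra.
have hy : `|(x + k *: v) - x| < d1.
  rewrite addrC addKr normrZ.
  move: kd1; rewrite ltr_pdivlMr // => kd1.
  have := normr_ge0 v; have := normr_ge0 k; nra.
have A := H1 (x + k *: v) k hy kd1'.
have := H2 x k; rewrite subrr normr0 => /(_ d20 kd2) B.
have -> : k *: (v + w) + x = (x + k *: v) + k *: w.
  by rewrite scalerDr addrC addrA.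
set P := g (x + k *: v + k *: w) - g (x + k *: v) - k * 'D_w g x in A.
set Q := g (x + k *: v) - g x - k * 'D_v g x in B.
have -> : g (x + k *: v + k *: w) - g x - k * ('D_v g x + 'D_w g x) = P + Q.
  rewrite /P /Q; ring.
apply: (le_trans (ler_normD _ _)).
by rewrite (splitr e) mulrDl lerD.
Qed.

End Calc.

Unset Implicit Arguments. Set Strict Implicit.


Section Smooth.
Variable R : realType.

Section Gen.
Context {V W : normedModType R}.

Lemma iterD_rcons s v (f : V -> W) : Defs.iterD s ('D_v f) = Defs.iterD (rcons s v) f.
Proof. by elim: s => //= a s ->. Qed.

Lemma smooth_D (f : V -> W) v : smooth f -> smooth ('D_v f).
Proof. by move=> sf s; rewrite iterD_rcons; exact: sf. Qed.

Lemma smooth_closed (P : (V -> W) -> Prop) :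
  (forall f, P f -> continuous f /\ (forall v x, derivable f x v) /\
     (forall v, P ('D_v f))) -> forall f, P f -> smooth f.
Proof.
move=> H f Pf s.
suff: P (Defs.iterD s f) by move/H => [? [? _]].
elim: s => //= v s IH.
by have [_ [_ D]] := H _ IH; exact: D v.
Qed.

Lemma smooth_cst (c : W) : smooth (fun _ : V => c).
Proof.
apply: (@smooth_closed (fun f => exists c, f = fun _ => c)); last by exists c.
move=> f [c' ->]; split; first exact: cst_continuous.
split; first by move=> v x; exact: derivable_cst.
move=> v; exists 0; apply/funext => x; exact: derive_cst.
Qed.

Lemma smooth_derivable {f : V -> W} : smooth f -> forall x v, derivable f x v.
Proof. by move=> sf x v; have [_ ] := sf [::]; apply. Qed.

Lemma smooth_cont {f : V -> W} : smooth f -> continuous f.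
Proof. by move=> sf; have [] := sf [::]. Qed.

End Gen.

Section Mx.
Variable V : normedModType R.
Variables a b : nat.
Implicit Types G : V -> 'M[R]_(a, b).

Lemma smooth_coord G i j : smooth G -> smooth (fun x => G x i j).
Proof.
move=> sG.
pose P := (fun g : V -> R => exists G : V -> 'M[R]_(a, b), smooth G /\ g = (fun x => G x i j)).
have : P (fun x => G x i j) by exists G.
move: (fun x => G x i j); apply: smooth_closed.
move=> _ [H [sH ->]]; split.
  move=> x; apply: (@continuous_comp _ _ _ H (fun M : 'M[R]_(a, b) => M i j)).
    exact: smooth_cont.
  exact: coord_continuous.
split.
  by move=> v x; move: (smooth_derivable sH x v) => /derivable_mxP; apply.
move=> v; exists ('D_v H); split; first exact: smooth_D.
by apply/funext => x /=; rewrite derive_mx ?mxE //; exact: smooth_derivable.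
Qed.

Lemma derive_prod (u : V -> R) G x v : derivable u x v -> derivable G x v ->
  derivable (fun y => u y *: G y) x v /\ 'D_v (fun y => u y *: G y) x = 'D_v u x *: G x + u x *: 'D_v G x.
Proof.
move=> du dG.
have E i j : (fun y => (u y *: G y) i j) = u * (fun y => G y i j).
  by apply/funext => y; rewrite !mxE.
have dGij i j : derivable (fun y => G y i j) x v by move/derivable_mxP: dG; apply.
have dP : derivable (fun y => u y *: G y) x v.
  apply/derivable_mxP => i j.
  by rewrite E; exact: (derivableM du (dGij i j)).
split; first exact: dP.
rewrite (derive_mx dP); apply/matrixP => i j.
rewrite mxE E (deriveM du (dGij i j)) (derive_mx dG) !mxE.
by rewrite addrC; congr (_ + _); exact: mulrC.
Qed.

Inductive SP : (V -> 'M[R]_(a, b)) -> Prop :=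
| SP0 : SP (fun _ => 0)
| SPc (c : R) (u : V -> R) G h : smooth u -> smooth G -> SP h ->
    SP (fun x => c *: (u x *: G x) + h x).

Lemma SP_prop f : SP f -> continuous f /\ (forall v x, derivable f x v) /\ (forall v, SP ('D_v f)).
Proof.
elim => [|c u G h su sG Sh [ch [dh Dh]]].
  split; first exact: cst_continuous.
  split; first by move=> v x; exact: derivable_cst.
  move=> v; have -> : 'D_v (fun _ : V => 0 : 'M[R]_(a, b)) = fun _ => 0.
    by apply/funext => x; exact: derive_cst.
  exact: SP0.
have cu := smooth_cont su; have cG := smooth_cont sG.
have du := smooth_derivable su; have dG := smooth_derivable sG.
split.
  move=> x; exact: (continuousD (continuousZl_tmp (k:=c) (continuousZ (cu x) (cG x))) (ch x)).
have dP v x : derivable (fun y => u y *: G y) x v by case: (derive_prod _ _ _ _ (du x v) (dG x v)).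
have dcP v x : derivable (fun y => c *: (u y *: G y)) x v := derivableZ (k:=c) (dP v x).
split.
  by move=> v x; exact: (derivableD (dcP v x) (dh v x)).
move=> v.
have -> : 'D_v (fun x => c *: (u x *: G x) + h x) =
  fun x => c *: ('D_v u x *: G x) + (c *: (u x *: 'D_v G x) + 'D_v h x).
  apply/funext => x /=.
  have E1 : 'D_v (fun x => c *: (u x *: G x) + h x) x =
    'D_v (fun x => c *: (u x *: G x)) x + 'D_v h x := deriveD (dcP v x) (dh v x).
  have E2 : 'D_v (fun x => c *: (u x *: G x)) x = c *: 'D_v (fun x => u x *: G x) x
    := deriveZ c (dP v x).
  rewrite E1 E2.
  by case: (derive_prod _ _ _ _ (du x v) (dG x v)) => _ ->; rewrite scalerDr addrA.
apply: SPc; [exact: smooth_D| exact: sG|].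
apply: SPc; [exact: su| exact: smooth_D| exact: Dh].
Qed.

Lemma SP_smooth f : SP f -> smooth f.
Proof. by apply: smooth_closed => g; exact: SP_prop. Qed.

Lemma smooth_SP f : smooth f -> SP f.
Proof.
move=> sf.
have -> : f = fun x => 1 *: ((fun _ => 1) x *: f x) + (fun _ => 0) x.
  by apply/funext => x; rewrite !scale1r addr0.
by apply: SPc => //; [exact: smooth_cst | exact: SP0].
Qed.

Lemma SP_add f g : SP f -> SP g -> SP (fun x => f x + g x).
Proof.
move=> Sf Sg; elim: Sf => [|c u G h su sG Sh IH].
  by have -> : (fun x => 0 + g x) = g by apply/funext => x; rewrite add0r.
have -> : (fun x => c *: (u x *: G x) + h x + g x) =
  fun x => c *: (u x *: G x) + (h x + g x) by apply/funext => x; rewrite addrA.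
exact: SPc.
Qed.

Lemma SP_scale k f : SP f -> SP (fun x => k *: f x).
Proof.
elim => [|c u G h su sG Sh IH].
  have -> : (fun x : V => k *: (0 : 'M[R]_(a, b))) = fun _ => 0.
    by apply/funext => x; rewrite scaler0.
  exact: SP0.
have -> : (fun x => k *: (c *: (u x *: G x) + h x)) =
  fun x => (k * c) *: (u x *: G x) + k *: h x.
  by apply/funext => x; rewrite scalerDr scalerA.
exact: SPc.
Qed.

Lemma SP_sum (I : eqType) (r : seq I) (F : I -> V -> 'M[R]_(a, b)) :
  (forall j, SP (F j)) -> SP (fun x => \sum_(j <- r) F j x).
Proof.
move=> HF; elim: r => [|j r IH].
  have -> : (fun x => \sum_(j <- [::]) F j x) = fun _ => 0.
    by apply/funext => x; rewrite big_nil.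
  exact: SP0.
have -> : (fun x => \sum_(i <- j :: r) F i x) = fun x => F j x + \sum_(i <- r) F i x.
  by apply/funext => x; rewrite big_cons.
exact: SP_add.
Qed.

End Mx.
End Smooth.
Arguments SP {R V a b} _.

Section Lin.
Variable R : realType.
Variable m : nat.

Lemma lin_scalar (g : 'rV[R]_m -> R) : smooth g -> forall x v,
  'D_v g x = \sum_(j < m) v 0 j * 'D_(delta_mx 0 j) g x.
Proof.
move=> sg x v.
have dg w y : derivable g y w := smooth_derivable _ sg y w.
have cg w : continuous ('D_w g) := smooth_cont _ (smooth_D _ g w sg).
have H (r : seq 'I_m) : 'D_(\sum_(j <- r) v 0 j *: delta_mx 0 j) g x =
    \sum_(j <- r) v 0 j * 'D_(delta_mx 0 j) g x.
  elim: r => [|j r IH]; first by rewrite !big_nil derive0.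
  rewrite !big_cons.
  have [_ ->] := derive_dirD x (dg (v 0 j *: delta_mx 0 j))
    (dg (\sum_(i <- r) v 0 i *: delta_mx 0 i)) (cg _) (cg _).
  rewrite IH.
  by have [_ ->] := derive_dirZ x (v 0 j) (dg (delta_mx 0 j)) (cg _).
rewrite -H.
by rewrite {1}(matrix_sum_delta v) big_ord1.
Qed.

Lemma lin_vec n (W : 'rV[R]_m -> 'rV[R]_n) : smooth W -> forall x v,
  'D_v W x = \sum_(j < m) v 0 j *: 'D_(delta_mx 0 j) W x.
Proof.
move=> sW x v.
rewrite (derive_mx (smooth_derivable _ sW x v)).
apply/matrixP => i k.
rewrite mxE summxE (lin_scalar _ (smooth_coord _ _ _ _ W i k sW)).
apply: eq_bigr => j _.
by rewrite !mxE (derive_mx (smooth_derivable _ sW x _)) mxE.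
Qed.

Lemma SP_term n (u : 'rV[R]_m -> R) (G : 'rV[R]_m -> 'rV[R]_n) :
  smooth u -> smooth G -> SP (fun x => u x *: G x).
Proof.
move=> su sG.
have -> : (fun x => u x *: G x) = fun x => 1 *: (u x *: G x) + (fun _ => 0) x.
  by apply/funext => x; rewrite scale1r addr0.
by apply: SPc => //; exact: SP0.
Qed.

Lemma smooth_bracket (U W : 'rV[R]_m -> 'rV[R]_m) :
  smooth U -> smooth W -> smooth (lie_bracket U W).
Proof.
move=> sU sW; apply: SP_smooth.
have -> : lie_bracket U W = fun x =>
   (\sum_(j < m) U x 0 j *: 'D_(delta_mx 0 j) W x) +
   (-1) *: \sum_(j < m) W x 0 j *: 'D_(delta_mx 0 j) U x.
  by apply/funext => x; rewrite /lie_bracket (lin_vec _ _ sW) (lin_vec _ _ sU) scaleN1r.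
apply: SP_add; last apply: SP_scale; apply: SP_sum => j.
  apply: SP_term; [exact: smooth_coord | exact: smooth_D].
apply: SP_term; [exact: smooth_coord | exact: smooth_D].
Qed.

End Lin.

Section Dsum.
Variable R : realType.
Variables m N : nat.

Lemma dsum_D (W : 'rV[R]_m -> 'rV[R]_m) (X v : 'M[R]_(N, m)) :
  (forall y w, derivable W y w) ->
  derivable (dsum N W) X v /\
  'D_v (dsum N W) X = \matrix_(i < N) 'D_(row i v) W (row i X).
Proof.
move=> dW.
have Eq i j : (fun h : R => h^-1 *: (((fun Y => dsum N W Y i j) \o shift X) (h *: v)
      - dsum N W X i j)) =
    (fun h : R => h^-1 *: (((fun y => W y 0 j) \o shift (row i X)) (h *: row i v)
      - W (row i X) 0 j)).
  apply/funext => h /=; rewrite !mxE.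
  congr (_ *: (W _ 0 j - _)); apply/rowP => k; rewrite !mxE.
  reflexivity.
have dE i j : derivable (fun Y => dsum N W Y i j) X v.
  rewrite /derivable Eq.
  by move: (dW (row i X) (row i v)) => /derivable_mxP; apply.
have dD : derivable (dsum N W) X v by apply/derivable_mxP.
split => //.
rewrite (derive_mx dD); apply/matrixP => i j.
rewrite !mxE (derive_mx (dW (row i X) (row i v))) mxE.
by rewrite /derive Eq.
Qed.

Lemma dsum_bracket (W1 W2 : 'rV[R]_m -> 'rV[R]_m) :
  (forall y w, derivable W1 y w) -> (forall y w, derivable W2 y w) ->
  lie_bracket (dsum N W1) (dsum N W2) = dsum N (lie_bracket W1 W2).
Proof.
move=> d1 d2; apply/funext => X; apply/matrixP => i j.
rewrite /lie_bracket (dsum_D _ _ _ d1).2 (dsum_D _ _ _ d2).2 !mxE.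
by rewrite !rowK.
Qed.

Lemma lie_lift d (V : 'I_d -> 'rV[R]_m -> 'rV[R]_m) :
  (forall i, smooth (V i)) -> forall W, Lie V W ->
  smooth W /\ Lie (fun i => dsum N (V i)) (dsum N W).
Proof.
move=> sV W; elim => [i | | W1 W2 _ [s1 L1] _ [s2 L2] | a W' _ [s L]
  | W1 W2 _ [s1 L1] _ [s2 L2]].
- by split; [exact: sV | exact: Lie_gen].
- split; first exact: smooth_cst.
  have -> : dsum N (fun _ : 'rV[R]_m => 0) = fun _ => 0.
    by apply/funext => X; apply/matrixP => i j; rewrite !mxE.
  exact: Lie_zero.
- split.
    by apply: SP_smooth; apply: SP_add; apply: smooth_SP.
  have -> : dsum N (fun x => W1 x + W2 x) = fun X => dsum N W1 X + dsum N W2 X.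
    by apply/funext => X; apply/matrixP => i j; rewrite !mxE.
  exact: Lie_add.
- split.
    by apply: SP_smooth; apply: SP_scale; apply: smooth_SP.
  have -> : dsum N (fun x => a *: W' x) = fun X => a *: dsum N W' X.
    by apply/funext => X; apply/matrixP => i j; rewrite !mxE.
  exact: Lie_scale.
- split; first exact: smooth_bracket.
  rewrite -dsum_bracket; last 2 first.
  + exact: smooth_derivable s1.
  + exact: smooth_derivable s2.
  exact: Lie_bracket.
Qed.

End Dsum.

Theorem lemma1 (R : realType) (m N d : nat) (Omega : set 'rV[R]_m)
  (V : 'I_d -> 'rV[R]_m -> 'rV[R]_m) (X : 'M[R]_(N, m)) :
  (2 <= m)%N ->
  bounded_set Omega -> open Omega -> connected Omega ->
  (forall i, smooth (V i)) ->
  config N Omega X ->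
  interpolates (Lie V) X ->
  Lie_at (fun i => dsum N (V i)) X = setT.
Proof.
move=> _ _ _ _ sV _ interp.
apply/seteqP; split => // Y _.
have [W LW HW] := interp Y.
have [_ L] := lie_lift R m N d V sV W LW.
exists (dsum N W) => //.
by apply/matrixP => i j; rewrite mxE HW mxE.
Qed.
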